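(* Assume the setup described in the context. Then there exists a unique continuous function $f:I\to\mathbb R$ with $f(x_i)=y_i$ for $i=0,\dots,n$ such that for every $i\in N_n$ and every $x\in I_i$, $$f(x)=F_i\big(L_i^{-1}(x),\,f(L_i^{-1}(x))\big).$$ Moreover, setting $A_i=\{(x,f(x)):x\in I_i\}$ for $i\in N_n$, one has $A_i=\bigcup_{j:\,c_{ij}=1}W_i(A_j)$ for every $i\in N_n$ (so $(A_1,\dots,A_n)$ is the invariant set of the recurrent iterated function system with maps $W_1,\dots,W_n$ and connection matrix $C$), and $\bigcup_{i=1}^nA_i$ is the graph of $f$, which interpolates $P$.
   Context: Let $n\ge 2$ and $P=\{(x_i,y_i):i=0,1,\dots,n\}\subset\mathbb R^2$ with $x_0<x_1<\dots<x_n$. Put $I=[x_0,x_n]$, $N_n=\{1,\dots,n\}$ and $I_i=[x_{i-1},x_i]$ for $i\in N_n$. Let $l\ge 2$ and for $k=1,\dots,l$ let $\tilde I_k=[x_{s(k)},x_{e(k)}]$ with $s(k),e(k)\in\{0,\dots,n\}$ and $e(k)-s(k)\ge 2$. Let $\gamma:N_n\to\{1,\dots,l\}$ be a map. For each $i\in N_n$, with $k=\gamma(i)$, let $L_i:\tilde I_k\to I_i$ be a homeomorphism which is a contraction (Lipschitz constant $c_{L_i}<1$) with $L_i(\{x_{s(k)},x_{e(k)}\})=\{x_{i-1},x_i\}$. Let $a:\mathbb R\to\mathbb R$ be Lipschitz with Lipschitz constant $L_a$. For each $i\in N_n$ let $b_i:\tilde I_{\gamma(i)}\to\mathbb R$ be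 Lipschitz, and let $s_i:I_i\to\mathbb R$ be Lipschitz with Lipschitz constant $<1$ and $\sup_{x\in I_i}|s_i(x)|\cdot L_a<1$. Define $F_i:\tilde I_{\gamma(i)}\times\mathbb R\to\mathbb R$ by $F_i(x,y)=s_i(L_i(x))\,a(y)+b_i(x)$, and assume the interpolation condition: for $k=\gamma(i)$, each $\alpha\in\{s(k),e(k)\}$ and the $\beta\in\{i-1,i\}$ with $L_i(x_\alpha)=x_\beta$, one has $F_i(x_\alpha,y_\alpha)=y_\beta$. Define $W_i:\tilde I_{\gamma(i)}\times\mathbb R\to I_i\times\mathbb R$ by $W_i(x,y)=(L_i(x),F_i(x,y))$. The connection matrix $C=(c_{ij})_{i,j=1}^n$ is defined by $c_{ij}=1$ if $I_j\subset\tilde I_{\gamma(i)}$ and $c_{ij}=0$ otherwise. *)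

(* Defs.v *)
From Stdlib Require Import Reals Lra Lia.
Open Scope R_scope.

Definition inI (a b t : R) : Prop := a <= t <= b.

Definition cont_on (a b : R) (f : R -> R) : Prop :=
  forall t, inI a b t -> forall eps, 0 < eps -> exists delta, 0 < delta /\
    forall t', inI a b t' -> Rabs (t' - t) < delta -> Rabs (f t' - f t) < eps.

Definition homeo_on (a b c d : R) (f : R -> R) : Prop :=
  cont_on a b f /\
  (forall t, inI a b t -> inI c d (f t)) /\
  exists g : R -> R,
    (forall u, inI c d u -> inI a b (g u)) /\
    (forall t, inI a b t -> g (f t) = t) /\
    (forall u, inI c d u -> f (g u) = u) /\
    cont_on c d g.

Definition lip_on_with (a b : R) (f : R -> R) (K : R) : Prop :=
  0 <= K /\ forall t t', inI a b t -> inI a b t' -> Rabs (f t - f t') <= K * Rabs (t - t').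

Definition Fmap (sc : nat -> R -> R) (L : nat -> R -> R) (a : R -> R)
  (b : nat -> R -> R) (i : nat) (t u : R) : R :=
  sc i (L i t) * a u + b i t.

Definition Wmap (sc : nat -> R -> R) (L : nat -> R -> R) (a : R -> R)
  (b : nat -> R -> R) (i : nat) (p : R * R) : R * R :=
  (L i (fst p), Fmap sc L a b i (fst p) (snd p)).

(* connection matrix entry: c_ij = 1 iff I_j is contained in tilde I_{gamma i} *)
Definition conn (x : nat -> R) (s e gamma : nat -> nat) (i j : nat) : Prop :=
  forall t, inI (x (j - 1)%nat) (x j) t -> inI (x (s (gamma i))) (x (e (gamma i))) t.

(* Main.v *)
Require Import Defs.
From Stdlib Require Import Reals Lra Lia IndefiniteDescription Arith Classical.
Open Scope R_scope.

Lemma cpt_intro (h : R -> R) (t : R) :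
  (forall eps, 0 < eps -> exists d, 0 < d /\ forall t', Rabs (t' - t) < d -> Rabs (h t' - h t) < eps) ->
  continuity_pt h t.
Proof.
  intros H. unfold continuity_pt, continue_in, limit1_in, limit_in. simpl. unfold R_dist.
  intros eps Heps. destruct (H eps Heps) as [d [Hd Hd']]. exists d; split; [lra|].
  intros z [_ Hz]. apply Hd'; exact Hz.
Qed.

Lemma cpt_elim (h : R -> R) (t : R) : continuity_pt h t ->
  forall eps, 0 < eps -> exists d, 0 < d /\ forall t', Rabs (t' - t) < d -> Rabs (h t' - h t) < eps.
Proof.
  unfold continuity_pt, continue_in, limit1_in, limit_in. simpl. unfold R_dist.
  intros H eps Heps. destruct (H eps Heps) as [d [Hd Hd']]. exists d; split; [lra|].
  intros z Hz. destruct (Req_dec z t) as [->|Hne].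
  - replace (h t - h t) with 0 by ring. rewrite Rabs_R0; lra.
  - apply Hd'. split; [split; [exact I| auto] | exact Hz].
Qed.

Lemma lip_cpt (h : R -> R) (K : R) : 0 <= K ->
  (forall t t', Rabs (h t - h t') <= K * Rabs (t - t')) -> forall t, continuity_pt h t.
Proof.
  intros HK H t. apply cpt_intro. intros eps Heps. exists (eps / (K + 1)). split.
  - apply Rdiv_lt_0_compat; lra.
  - intros t' Ht'. eapply Rle_lt_trans; [apply H|].
    apply Rle_lt_trans with ((K+1) * Rabs (t' - t)).
    + apply Rmult_le_compat_r; [apply Rabs_pos| lra].
    + apply Rmult_lt_reg_l with (/ (K+1)). apply Rinv_0_lt_compat; lra.
      rewrite <- Rmult_assoc, Rinv_l by lra. rewrite Rmult_1_l.
      unfold Rdiv in Ht'. lra.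
Qed.

Definition clamp (a b t : R) : R := Rmin b (Rmax a t).

Lemma clamp_in a b t : a <= b -> inI a b (clamp a b t).
Proof. intros. unfold inI, clamp, Rmin, Rmax. repeat destruct Rle_dec; lra. Qed.

Lemma clamp_id a b t : inI a b t -> clamp a b t = t.
Proof. unfold inI, clamp, Rmin, Rmax. intros. repeat destruct Rle_dec; lra. Qed.

Lemma clamp_lip a b t t' : Rabs (clamp a b t - clamp a b t') <= Rabs (t - t').
Proof.
  unfold clamp, Rmin, Rmax. repeat destruct Rle_dec;
  unfold Rabs; repeat destruct Rcase_abs; lra.
Qed.

Lemma cont_on_cpt a b h : a <= b -> cont_on a b h -> forall t, continuity_pt (fun z => h (clamp a b z)) t.
Proof.
  intros Hab H t. apply cpt_intro. intros eps Heps.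
  destruct (H (clamp a b t) (clamp_in a b t Hab) eps Heps) as [d [Hd Hd']].
  exists d; split; auto. intros t' Ht'. apply Hd'. apply clamp_in; auto.
  eapply Rle_lt_trans; [apply clamp_lip| exact Ht'].
Qed.

Lemma cpt_cont_on a b h h' : (forall t, inI a b t -> continuity_pt h' t) ->
  (forall t, inI a b t -> h' t = h t) -> cont_on a b h.
Proof.
  intros Hc He t Ht eps Heps. destruct (cpt_elim _ _ (Hc t Ht) eps Heps) as [d [Hd Hd']].
  exists d; split; auto. intros t' Ht' Htt. rewrite <- (He t Ht), <- (He t' Ht'). auto.
Qed.

Lemma cont_on_ext a b h h' : cont_on a b h -> (forall t, inI a b t -> h t = h' t) -> cont_on a b h'.
Proof.
  intros H He t Ht eps Heps. destruct (H t Ht eps Heps) as [d [Hd Hd']].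
  exists d; split; auto. intros t' Ht' Htt. rewrite <- (He t Ht), <- (He t' Ht'). auto.
Qed.

Lemma cont_on_glue a m c h : a <= m -> m <= c -> cont_on a m h -> cont_on m c h -> cont_on a c h.
Proof.
  intros Ham Hmc H1 H2 t Ht eps Heps. unfold inI in *.
  destruct (Rlt_le_dec t m) as [Hlt|Hge].
  - destruct (H1 t ltac:(unfold inI; lra) eps Heps) as [d [Hd Hd']].
    exists (Rmin d (m - t)). split. { apply Rmin_pos; lra. }
    intros t' Ht' Htt. apply Hd'. unfold inI.
    assert (Rabs (t'-t) < m - t) by (eapply Rlt_le_trans; [exact Htt| apply Rmin_r]).
    unfold Rabs in H; destruct Rcase_abs; lra.
    eapply Rlt_le_trans; [exact Htt| apply Rmin_l].
  - destruct (Req_dec t m) as [->|Hne].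
    + destruct (H1 m ltac:(unfold inI; lra) eps Heps) as [d1 [Hd1 Hd1']].
      destruct (H2 m ltac:(unfold inI; lra) eps Heps) as [d2 [Hd2 Hd2']].
      exists (Rmin d1 d2). split. { apply Rmin_pos; lra. }
      intros t' Ht' Htt. destruct (Rle_dec t' m).
      * apply Hd1'. unfold inI; lra. eapply Rlt_le_trans; [exact Htt| apply Rmin_l].
      * apply Hd2'. unfold inI; lra. eapply Rlt_le_trans; [exact Htt| apply Rmin_r].
    + destruct (H2 t ltac:(unfold inI; lra) eps Heps) as [d [Hd Hd']].
      exists (Rmin d (t - m)). split. { apply Rmin_pos; lra. }
      intros t' Ht' Htt. apply Hd'. unfold inI.
      assert (Rabs (t'-t) < t - m) by (eapply Rlt_le_trans; [exact Htt| apply Rmin_r]).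
      unfold Rabs in H; destruct Rcase_abs; lra.
      eapply Rlt_le_trans; [exact Htt| apply Rmin_l].
Qed.

Lemma cont_on_bounded a b h : a <= b -> cont_on a b h -> exists M, forall t, inI a b t -> Rabs (h t) <= M.
Proof.
  intros Hab H. pose proof (cont_on_cpt a b h Hab H) as Hc.
  destruct (continuity_ab_maj _ a b Hab (fun c _ => Hc c)) as [M1 [HM1 _]].
  destruct (continuity_ab_min _ a b Hab (fun c _ => Hc c)) as [M2 [HM2 _]].
  exists (Rmax (Rabs (h (clamp a b M1))) (Rabs (h (clamp a b M2)))).
  intros t Ht. specialize (HM1 t Ht). specialize (HM2 t Ht). cbv beta in HM1, HM2. rewrite (clamp_id a b t Ht) in HM1, HM2.
  pose proof (Rmax_l (Rabs (h (clamp a b M1))) (Rabs (h (clamp a b M2)))).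
  pose proof (Rmax_r (Rabs (h (clamp a b M1))) (Rabs (h (clamp a b M2)))).
  pose proof (Rle_abs (h (clamp a b M1))). pose proof (Rabs_pos (h (clamp a b M2))).
  pose proof (Rabs_Ropp (h (clamp a b M2))). pose proof (Rle_abs (- h (clamp a b M2))).
  apply Rabs_le. lra.
Qed.

Lemma lip_on_cpt a b h K : a <= b -> lip_on_with a b h K -> forall t, continuity_pt (fun z => h (clamp a b z)) t.
Proof.
  intros Hab [HK H]. apply (lip_cpt _ K HK). intros t t'.
  eapply Rle_trans; [apply H; apply clamp_in; auto|].
  apply Rmult_le_compat_l; auto. apply clamp_lip.
Qed.

Lemma small_zero (z C q : R) : 0 <= q < 1 -> (forall k, Rabs z <= C * q ^ k) -> z = 0.
Proof.
  intros Hq H. destruct (Req_dec z 0) as [|Hz]; auto. exfalso.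
  assert (Hz' : 0 < Rabs z) by (apply Rabs_pos_lt; auto).
  assert (HC : 0 < C). { specialize (H 0%nat). simpl in H. lra. }
  destruct (pow_lt_1_zero q ltac:(rewrite Rabs_pos_eq; lra) (Rabs z / C)) as [N HN].
  { apply Rdiv_lt_0_compat; lra. }
  specialize (HN N (le_n N)). specialize (H N). rewrite Rabs_pos_eq in HN by (apply pow_le; lra).
  apply (Rmult_lt_compat_l C) in HN; auto.
  replace (C * (Rabs z / C)) with (Rabs z) in HN by (field; lra). lra.
Qed.

Lemma lim_bound (U : nat -> R) l c B k : Un_cv U l ->
  (forall m, (m >= k)%nat -> Rabs (U m - c) <= B) -> Rabs (l - c) <= B.
Proof.
  intros Hcv H. destruct (Rle_dec (Rabs (l-c)) B) as [|Hn]; auto. exfalso.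
  destruct (Hcv (Rabs (l-c) - B)) as [N HN]. lra.
  specialize (HN (Nat.max N k) ltac:(lia)). specialize (H (Nat.max N k) ltac:(lia)).
  unfold R_dist in HN. set (w := U (Nat.max N k)) in *.
  pose proof (Rabs_triang (l - w) (w - c)). replace (l - w + (w - c)) with (l - c) in H0 by ring.
  rewrite Rabs_minus_sym in HN. lra.
Qed.

Lemma cpt_comp (f1 f2 : R -> R) z : continuity_pt f1 z -> continuity_pt f2 (f1 z) -> continuity_pt (fun w => f2 (f1 w)) z.
Proof. apply continuity_pt_comp. Qed.
Lemma cpt_plus (f1 f2 : R -> R) z : continuity_pt f1 z -> continuity_pt f2 z -> continuity_pt (fun w => f1 w + f2 w) z.
Proof. apply continuity_pt_plus. Qed.
Lemma cpt_mult (f1 f2 : R -> R) z : continuity_pt f1 z -> continuity_pt f2 z -> continuity_pt (fun w => f1 w * f2 w) z.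
Proof. apply continuity_pt_mult. Qed.

Lemma geo_small q C eps : 0 <= q < 1 -> 0 <= C -> 0 < eps -> exists N, forall m, (m >= N)%nat -> C * q ^ m < eps.
Proof.
  intros Hq HC He. destruct (pow_lt_1_zero q ltac:(rewrite Rabs_pos_eq; lra) (eps / (C + 1))) as [N HN].
  { apply Rdiv_lt_0_compat; lra. }
  exists N. intros m Hm. specialize (HN m Hm). rewrite Rabs_pos_eq in HN by (apply pow_le; lra).
  pose proof (pow_le q m (proj1 Hq)).
  apply Rle_lt_trans with ((C+1) * q ^ m). nra.
  apply (Rmult_lt_compat_l (C+1)) in HN; [|lra].
  replace ((C + 1) * (eps / (C + 1))) with eps in HN by (field; lra). lra.
Qed.

Lemma mono_lt (x : nat -> R) n : (forall i, (i < n)%nat -> x i < x (S i)) ->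
  forall j k, (j < k <= n)%nat -> x j < x k.
Proof.
  intros Hx j k. induction k as [|k IH]; intros Hk; [lia|].
  destruct (Nat.eq_dec j k) as [->|Hne]. apply Hx; lia.
  apply Rlt_trans with (x k). apply IH; lia. apply Hx; lia.
Qed.

Lemma mono_le (x : nat -> R) n : (forall i, (i < n)%nat -> x i < x (S i)) ->
  forall j k, (j <= k <= n)%nat -> x j <= x k.
Proof.
  intros Hx j k Hk. destruct (Nat.eq_dec j k) as [->|]. lra. left. apply (mono_lt x n Hx); lia.
Qed.

Lemma cover (x : nat -> R) n : (forall i, (i < n)%nat -> x i < x (S i)) ->
  forall p m t, (p < m <= n)%nat -> x p <= t <= x m ->
  exists j, (p < j <= m)%nat /\ inI (x (j - 1)%nat) (x j) t.
Proof.
  intros Hx p m. induction m as [|m IH]; intros t Hm Ht; [lia|].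
  destruct (Rle_dec (x m) t) as [Hle|Hlt].
  - exists (S m). split; [lia|]. unfold inI. replace (S m - 1)%nat with m by lia. lra.
  - destruct (IH t) as [j [Hj Hj']]. 2: lra.
    { destruct (Nat.eq_dec p m) as [->|]. lra. lia. }
    exists j; split; auto; lia.
Qed.

Lemma overlap (x : nat -> R) n : (forall i, (i < n)%nat -> x i < x (S i)) ->
  forall i i' u, (1 <= i <= n)%nat -> (1 <= i' <= n)%nat ->
  inI (x (i - 1)%nat) (x i) u -> inI (x (i' - 1)%nat) (x i') u ->
  i = i' \/ exists m, (m = i - 1 \/ m = i)%nat /\ (m = i' - 1 \/ m = i')%nat /\ u = x m.
Proof.
  intros Hx i i' u Hi Hi' H1 H2. unfold inI in *.
  destruct (lt_eq_lt_dec i i') as [[Hlt|Heq]|Hgt]; auto; right.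
  - assert (i' - 1 = i)%nat.
    { destruct (Nat.eq_dec (i'-1) i) as [|Hne]; auto.
      assert (Hr : x i < x (i'-1)%nat) by (apply (mono_lt x n Hx); lia). lra. }
    exists i. split; [lia|]. split; [lia|]. rewrite H in H2. lra.
  - assert (i - 1 = i')%nat.
    { destruct (Nat.eq_dec (i-1) i') as [|Hne]; auto.
      assert (Hr : x i' < x (i-1)%nat) by (apply (mono_lt x n Hx); lia). lra. }
    exists i'. split; [lia|]. split; [lia|]. rewrite H in H1. lra.
Qed.

Lemma idx_exists (x : nat -> R) n : (forall i, (i < n)%nat -> x i < x (S i)) -> (1 <= n)%nat ->
  exists idx : R -> nat, forall u, inI (x 0%nat) (x n) u ->
    (1 <= idx u <= n)%nat /\ inI (x (idx u - 1)%nat) (x (idx u)) u.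
Proof.
  intros Hx Hn.
  assert (H : forall u, exists j, inI (x 0%nat) (x n) u -> (1 <= j <= n)%nat /\ inI (x (j - 1)%nat) (x j) u).
  { intros u. destruct (classic (inI (x 0%nat) (x n) u)) as [Hu|Hu].
    - destruct (cover x n Hx 0 n u) as [j [Hj Hj']]; [lia|exact Hu|]. exists j. intros _. split; auto; lia.
    - exists 0%nat. intros; contradiction. }
  exists (fun u => proj1_sig (constructive_indefinite_description _ (H u))).
  intros u Hu. exact (proj2_sig (constructive_indefinite_description _ (H u)) Hu).
Qed.

Lemma glue (x : nat -> R) n (idx : R -> nat) (phi : nat -> R -> R) (v : nat -> R) :
  (forall i, (i < n)%nat -> x i < x (S i)) -> (1 <= n)%nat ->
  (forall u, inI (x 0%nat) (x n) u -> (1 <= idx u <= n)%nat /\ inI (x (idx u - 1)%nat) (x (idx u)) u) ->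
  (forall i, (1 <= i <= n)%nat -> cont_on (x (i-1)%nat) (x i) (phi i)) ->
  (forall i m, (1 <= i <= n)%nat -> (m = i - 1 \/ m = i)%nat -> phi i (x m) = v m) ->
  (forall i u, (1 <= i <= n)%nat -> inI (x (i-1)%nat) (x i) u -> phi (idx u) u = phi i u) /\
  cont_on (x 0%nat) (x n) (fun u => phi (idx u) u).
Proof.
  intros Hx Hn Hidx H1 H2.
  assert (E : forall i u, (1 <= i <= n)%nat -> inI (x (i-1)%nat) (x i) u -> phi (idx u) u = phi i u).
  { intros i u Hi Hu.
    assert (HuI : inI (x 0%nat) (x n) u).
    { unfold inI in *. pose proof (mono_le x n Hx 0 (i-1)). pose proof (mono_le x n Hx i n).
      split. apply Rle_trans with (x (i-1)%nat); [apply H; lia| lra].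
      apply Rle_trans with (x i); [lra| apply H0; lia]. }
    destruct (Hidx u HuI) as [Hj Hj'].
    destruct (overlap x n Hx i (idx u) u Hi Hj Hu Hj') as [Heq|[m [Hm1 [Hm2 Hum]]]]. { rewrite <- Heq; auto. }
    pose proof (H2 i m Hi Hm1) as Ha; pose proof (H2 (idx u) m Hj Hm2) as Hb.
    rewrite <- Hum in Ha, Hb. congruence. }
  split; auto.
  assert (forall m, (1 <= m <= n)%nat -> cont_on (x 0%nat) (x m) (fun u => phi (idx u) u)).
  { intros m. induction m as [|m IH]; intros Hm; [lia|].
    destruct (Nat.eq_dec m 0) as [->|Hm0].
    - apply cont_on_ext with (phi 1%nat). apply (H1 1%nat); lia.
      intros t Ht. symmetry. apply E; auto; lia.
    - apply cont_on_glue with (x m). apply (mono_le x n Hx); lia. apply (mono_le x n Hx); lia.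
      apply IH; lia.
      apply cont_on_ext with (phi (S m)). replace m with (S m - 1)%nat at 1 by lia. apply H1; lia.
      intros t Ht. symmetry. apply E. lia. replace (S m - 1)%nat with m by lia. auto. }
  apply H; lia.
Qed.

Theorem theorem1
  (n : nat) (x y : nat -> R) (l : nat) (s e gamma : nat -> nat)
  (L : nat -> R -> R) (a : R -> R) (La : R)
  (b : nat -> R -> R) (sc : nat -> R -> R)
  (Hn : (2 <= n)%nat)
  (Hx : forall i, (i < n)%nat -> x i < x (S i))
  (Hl : (2 <= l)%nat)
  (Hse : forall k, (1 <= k <= l)%nat ->
     (s k <= n)%nat /\ (e k <= n)%nat /\ (s k + 2 <= e k)%nat)
  (Hgamma : forall i, (1 <= i <= n)%nat -> (1 <= gamma i <= l)%nat)
  (HLhomeo : forall i, (1 <= i <= n)%nat ->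
     homeo_on (x (s (gamma i))) (x (e (gamma i))) (x (i - 1)%nat) (x i) (L i))
  (HLcontr : forall i, (1 <= i <= n)%nat -> exists c, c < 1 /\
     lip_on_with (x (s (gamma i))) (x (e (gamma i))) (L i) c)
  (HLends : forall i, (1 <= i <= n)%nat ->
     (L i (x (s (gamma i))) = x (i - 1)%nat /\ L i (x (e (gamma i))) = x i) \/
     (L i (x (s (gamma i))) = x i /\ L i (x (e (gamma i))) = x (i - 1)%nat))
  (Ha : 0 <= La /\ forall u v, Rabs (a u - a v) <= La * Rabs (u - v))
  (Hb : forall i, (1 <= i <= n)%nat -> exists K,
     lip_on_with (x (s (gamma i))) (x (e (gamma i))) (b i) K)
  (Hsc : forall i, (1 <= i <= n)%nat -> exists c, c < 1 /\
     lip_on_with (x (i - 1)%nat) (x i) (sc i) c)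
  (Hscsup : forall i, (1 <= i <= n)%nat -> exists M,
     (forall t, inI (x (i - 1)%nat) (x i) t -> Rabs (sc i t) <= M) /\ M * La < 1)
  (Hinterp : forall i, (1 <= i <= n)%nat -> forall alpha beta : nat,
     (alpha = s (gamma i) \/ alpha = e (gamma i)) ->
     (beta = (i - 1)%nat \/ beta = i) ->
     L i (x alpha) = x beta ->
     Fmap sc L a b i (x alpha) (y alpha) = y beta) :
  let good (f : R -> R) : Prop :=
    cont_on (x 0%nat) (x n) f /\
    (forall i, (i <= n)%nat -> f (x i) = y i) /\
    (forall i, (1 <= i <= n)%nat -> forall t u,
       inI (x (i - 1)%nat) (x i) u ->
       inI (x (s (gamma i))) (x (e (gamma i))) t -> L i t = u ->
       f u = Fmap sc L a b i t (f t)) in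
  exists f : R -> R,
    good f /\
    (forall g : R -> R, good g -> forall t, inI (x 0%nat) (x n) t -> g t = f t) /\
    (* A_i = union over j with c_ij = 1 of W_i(A_j) *)
    (forall i, (1 <= i <= n)%nat -> forall p : R * R,
       (inI (x (i - 1)%nat) (x i) (fst p) /\ snd p = f (fst p)) <->
       (exists j, (1 <= j <= n)%nat /\ conn x s e gamma i j /\
          exists t, inI (x (j - 1)%nat) (x j) t /\
            p = Wmap sc L a b i (t, f t))) /\
    (* union of the A_i is the graph of f over I *)
    (forall p : R * R,
       (exists i, (1 <= i <= n)%nat /\ inI (x (i - 1)%nat) (x i) (fst p) /\
          snd p = f (fst p)) <->
       (inI (x 0%nat) (x n) (fst p) /\ snd p = f (fst p))).
Proof.
  intros good.
  assert (Hn1 : (1 <= n)%nat) by lia.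
  pose proof (mono_le x n Hx) as Hle. pose proof (mono_lt x n Hx) as Hlt.
  assert (Hsub : forall i t, (1 <= i <= n)%nat -> inI (x (s (gamma i))) (x (e (gamma i))) t -> inI (x 0%nat) (x n) t).
  { intros i t Hi Ht. destruct (Hse (gamma i) (Hgamma i Hi)) as [H1 [H2 H3]]. unfold inI in *.
    pose proof (Hle 0%nat (s (gamma i)) ltac:(lia)). pose proof (Hle (e (gamma i)) n ltac:(lia)). lra. }
  assert (Hsle : forall i, (1 <= i <= n)%nat -> x (s (gamma i)) <= x (e (gamma i))).
  { intros i Hi. destruct (Hse (gamma i) (Hgamma i Hi)) as [H1 [H2 H3]]. apply Hle; lia. }
  assert (HIsub : forall i t, (1 <= i <= n)%nat -> inI (x (i-1)%nat) (x i) t -> inI (x 0%nat) (x n) t).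
  { intros i t Hi Ht. unfold inI in *. pose proof (Hle 0%nat (i-1)%nat ltac:(lia)). pose proof (Hle i n ltac:(lia)). lra. }
  assert (HIle : forall i, (1 <= i <= n)%nat -> x (i-1)%nat <= x i).
  { intros i Hi. apply Hle; lia. }
  assert (H0n : x 0%nat <= x n) by (apply Hle; lia).
  assert (HLinv : exists Linv : nat -> R -> R, forall i, (1 <= i <= n)%nat ->
     (forall u, inI (x (i-1)%nat) (x i) u -> inI (x (s (gamma i))) (x (e (gamma i))) (Linv i u)) /\
     (forall t, inI (x (s (gamma i))) (x (e (gamma i))) t -> Linv i (L i t) = t) /\
     (forall u, inI (x (i-1)%nat) (x i) u -> L i (Linv i u) = u) /\
     cont_on (x (i-1)%nat) (x i) (Linv i)).
  { assert (H : forall i, exists g : R -> R, (1 <= i <= n)%nat ->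
     (forall u, inI (x (i-1)%nat) (x i) u -> inI (x (s (gamma i))) (x (e (gamma i))) (g u)) /\
     (forall t, inI (x (s (gamma i))) (x (e (gamma i))) t -> g (L i t) = t) /\
     (forall u, inI (x (i-1)%nat) (x i) u -> L i (g u) = u) /\
     cont_on (x (i-1)%nat) (x i) g).
    { intros i. destruct (classic (1 <= i <= n)%nat) as [Hi|Hi].
      - destruct (HLhomeo i Hi) as [_ [_ [g [G1 [G2 [G3 G4]]]]]]. exists g. intros _. auto.
      - exists (fun z => z). intros; contradiction. }
    exists (fun i => proj1_sig (constructive_indefinite_description _ (H i))).
    intros i Hi. exact (proj2_sig (constructive_indefinite_description _ (H i)) Hi). }
  destruct HLinv as [Linv HLinv].
  assert (HLin : forall i t, (1 <= i <= n)%nat -> inI (x (s (gamma i))) (x (e (gamma i))) t -> inI (x (i-1)%nat) (x i) (L i t)).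
  { intros i t Hi Ht. destruct (HLhomeo i Hi) as [_ [H _]]. auto. }
  assert (Hq : exists q, 0 <= q < 1 /\ forall i u, (1 <= i <= n)%nat -> inI (x (i-1)%nat) (x i) u -> Rabs (sc i u) * La <= q).
  { assert (forall m, exists q, 0 <= q < 1 /\ forall i u, (1 <= i <= m)%nat -> (i <= n)%nat -> inI (x (i-1)%nat) (x i) u -> Rabs (sc i u) * La <= q).
    { intros m. induction m as [|m [q [Hq1 Hq2]]].
      - exists 0. split. lra. intros; lia.
      - destruct (le_lt_dec (S m) n) as [Hm|Hm].
        + destruct (Hscsup (S m) ltac:(lia)) as [M [HM1 HM2]].
          exists (Rmax q (M * La)). split. split. eapply Rle_trans; [exact (proj1 Hq1)| apply Rmax_l].
          unfold Rmax; destruct Rle_dec; lra.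
          intros i u Hi Hin Hu. destruct (Nat.eq_dec i (S m)) as [->|Hne].
          * eapply Rle_trans; [| apply Rmax_r]. apply Rmult_le_compat_r. lra. auto.
          * eapply Rle_trans; [| apply Rmax_l]. apply Hq2; auto; lia.
        + exists q. split; auto. intros. apply Hq2; auto; lia. }
    destruct (H n) as [q [Hq1 Hq2]]. exists q. split; auto. intros i u Hi Hu. apply Hq2; auto; lia. }
  destruct Hq as [q [Hq01 Hq]].
  assert (Fdiff : forall i t z1 z2, (1 <= i <= n)%nat -> inI (x (s (gamma i))) (x (e (gamma i))) t ->
     Rabs (Fmap sc L a b i t z1 - Fmap sc L a b i t z2) <= q * Rabs (z1 - z2)).
  { intros i t z1 z2 Hi Ht. unfold Fmap.
    replace (sc i (L i t) * a z1 + b i t - (sc i (L i t) * a z2 + b i t)) with (sc i (L i t) * (a z1 - a z2)) by ring.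
    rewrite Rabs_mult. pose proof (Hq i (L i t) Hi (HLin i t Hi Ht)). destruct Ha as [HLa Ha].
    pose proof (Ha z1 z2). pose proof (Rabs_pos (sc i (L i t))). pose proof (Rabs_pos (z1 - z2)). nra. }
  destruct (idx_exists x n Hx Hn1) as [idx Hidx].
  pose (phiF := fun (f : R -> R) (i : nat) (u : R) => Fmap sc L a b i (Linv i u) (f (Linv i u))).
  pose (T := fun (f : R -> R) (u : R) => phiF f (idx u) u).
  pose (X := fun f : R -> R => cont_on (x 0%nat) (x n) f /\ forall j, (j <= n)%nat -> f (x j) = y j).
  assert (Hjm : forall i j, (1 <= i <= n)%nat -> (j <= n)%nat -> inI (x (i-1)%nat) (x i) (x j) -> (j = i - 1 \/ j = i)%nat).
  { intros i j Hi Hj [H1 H2]. destruct (lt_eq_lt_dec j (i-1)) as [[Hl1|Hl1]|Hl1]; auto.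
    - assert (x j < x (i-1)%nat) by (apply Hlt; lia). lra.
    - destruct (Nat.eq_dec j i); auto. assert (x i < x j) by (apply Hlt; lia). lra. }
  assert (Tend : forall f, (forall j, (j <= n)%nat -> f (x j) = y j) ->
     forall i m, (1 <= i <= n)%nat -> (m = i - 1 \/ m = i)%nat -> phiF f i (x m) = y m).
  { intros f Hf i m Hi Hm. destruct (Hse (gamma i) (Hgamma i Hi)) as [Hs1 [Hs2 Hs3]].
    assert (Hsin : inI (x (s (gamma i))) (x (e (gamma i))) (x (s (gamma i)))) by (unfold inI; pose proof (Hsle i Hi); lra).
    assert (Hein : inI (x (s (gamma i))) (x (e (gamma i))) (x (e (gamma i)))) by (unfold inI; pose proof (Hsle i Hi); lra).
    unfold phiF. destruct (HLinv i Hi) as [_ [HL2 _]].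
    destruct (HLends i Hi) as [[E1 E2]|[E1 E2]]; destruct Hm as [->| ->].
    - rewrite <- E1, HL2 by auto. rewrite Hf by lia. apply Hinterp; auto.
    - rewrite <- E2, HL2 by auto. rewrite Hf by lia. apply Hinterp; auto.
    - rewrite <- E2, HL2 by auto. rewrite Hf by lia. apply Hinterp; auto.
    - rewrite <- E1, HL2 by auto. rewrite Hf by lia. apply Hinterp; auto. }
  assert (phi_cont : forall f, cont_on (x 0%nat) (x n) f -> forall i, (1 <= i <= n)%nat ->
     cont_on (x (i-1)%nat) (x i) (phiF f i)).
  { intros f Hf i Hi.
    pose (cI := clamp (x (i-1)%nat) (x i)). pose (c0 := clamp (x 0%nat) (x n)).
    pose (cT := clamp (x (s (gamma i))) (x (e (gamma i)))).
    apply cpt_cont_on with (fun z => sc i (cI z) * a (f (c0 (Linv i (cI z)))) + b i (cT (Linv i (cI z)))).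
    - intros z _. destruct (HLinv i Hi) as [_ [_ [_ HL4]]].
      destruct (Hsc i Hi) as [cs [_ Hcs]]. destruct (Hb i Hi) as [Kb Hkb]. destruct Ha as [HLa Ha'].
      apply cpt_plus. apply cpt_mult.
      + apply (lip_on_cpt _ _ _ cs (HIle i Hi) Hcs).
      + apply (cpt_comp (fun z => Linv i (cI z)) (fun w => a (f (c0 w)))).
        * apply (cont_on_cpt _ _ _ (HIle i Hi) HL4).
        * apply (cpt_comp (fun w => f (c0 w)) a). apply (cont_on_cpt _ _ _ H0n Hf).
          apply (lip_cpt a La HLa Ha').
      + apply (cpt_comp (fun z => Linv i (cI z)) (fun w => b i (cT w))).
        * apply (cont_on_cpt _ _ _ (HIle i Hi) HL4).
        * apply (lip_on_cpt _ _ _ Kb (Hsle i Hi) Hkb).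
    - intros z Hz. destruct (HLinv i Hi) as [HL1 [_ [HL3 _]]]. unfold phiF, Fmap, cI, c0, cT.
      rewrite (clamp_id _ _ z Hz). rewrite (clamp_id _ _ _ (HL1 z Hz)).
      rewrite (clamp_id _ _ _ (Hsub i _ Hi (HL1 z Hz))). rewrite HL3 by auto. reflexivity. }
  assert (TX : forall f, X f -> X (T f) /\ forall i u, (1 <= i <= n)%nat -> inI (x (i-1)%nat) (x i) u -> T f u = phiF f i u).
  { intros f [Hf1 Hf2].
    destruct (glue x n idx (phiF f) y Hx Hn1 Hidx (phi_cont f Hf1) (Tend f Hf2)) as [E C].
    split; [split|].
    - exact C.
    - intros j Hj. assert (Hxj : inI (x 0%nat) (x n) (x j)) by (unfold inI; split; apply Hle; lia).
      destruct (Hidx _ Hxj) as [Hi Hin]. unfold T. apply Tend; auto.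
    - exact E. }
  assert (Tcontr : forall f g D, (forall t, inI (x 0%nat) (x n) t -> Rabs (f t - g t) <= D) ->
     forall u, inI (x 0%nat) (x n) u -> Rabs (T f u - T g u) <= q * D).
  { intros f g D HD u Hu. destruct (Hidx u Hu) as [Hi Hin]. unfold T, phiF.
    destruct (HLinv _ Hi) as [HL1 _]. pose proof (HL1 u Hin) as Ht.
    eapply Rle_trans. apply Fdiff; auto. apply Rmult_le_compat_l. lra. apply HD. eapply Hsub; eauto. }
  pose (lin := fun (i : nat) (u : R) => y (i-1)%nat + (y i - y (i-1)%nat) / (x i - x (i-1)%nat) * (u - x (i-1)%nat)).
  assert (Hlin_v : forall i m, (1 <= i <= n)%nat -> (m = i - 1 \/ m = i)%nat -> lin i (x m) = y m).
  { intros i m Hi [-> | ->]; unfold lin.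
    - ring.
    - assert (x (i-1)%nat < x i) by (apply Hlt; lia). field. lra. }
  assert (Hlin_c : forall i, (1 <= i <= n)%nat -> cont_on (x (i-1)%nat) (x i) (lin i)).
  { intros i Hi. apply cpt_cont_on with (lin i); auto.
    intros z _. apply (lip_cpt _ (Rabs ((y i - y (i-1)%nat) / (x i - x (i-1)%nat)))). apply Rabs_pos.
    intros t t'. unfold lin. rewrite <- Rabs_mult. right. f_equal. ring. }
  pose (f0 := fun u => lin (idx u) u).
  assert (Hf0 : X f0).
  { destruct (glue x n idx lin y Hx Hn1 Hidx Hlin_c Hlin_v) as [_ C]. split. exact C.
    intros j Hj. assert (Hxj : inI (x 0%nat) (x n) (x j)) by (unfold inI; split; apply Hle; lia).
    destruct (Hidx _ Hxj) as [Hi Hin]. unfold f0. apply Hlin_v; auto. }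
  pose (fs := fun k => Nat.iter k T f0).
  assert (Hfs : forall k, X (fs k)).
  { induction k. exact Hf0. exact (proj1 (TX _ IHk)). }
  assert (HfsS : forall k, fs (S k) = T (fs k)) by reflexivity.
  assert (HD0 : exists D0, 0 <= D0 /\ forall t, inI (x 0%nat) (x n) t -> Rabs (fs 1%nat t - fs 0%nat t) <= D0).
  { destruct (cont_on_bounded _ _ _ H0n (proj1 (Hfs 1%nat))) as [M1 HM1].
    destruct (cont_on_bounded _ _ _ H0n (proj1 (Hfs 0%nat))) as [M0 HM0].
    assert (Hx0 : inI (x 0%nat) (x n) (x 0%nat)) by (unfold inI; lra).
    exists (M1 + M0). split.
    - pose proof (HM1 _ Hx0). pose proof (HM0 _ Hx0). pose proof (Rabs_pos (fs 1%nat (x 0%nat))).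
      pose proof (Rabs_pos (fs 0%nat (x 0%nat))). lra.
    - intros t Ht. unfold Rminus. eapply Rle_trans. apply Rabs_triang. rewrite Rabs_Ropp.
      pose proof (HM1 _ Ht). pose proof (HM0 _ Ht). lra. }
  destruct HD0 as [D0 [HD0p HD0]].
  assert (Hstep : forall k t, inI (x 0%nat) (x n) t -> Rabs (fs (S k) t - fs k t) <= D0 * q ^ k).
  { induction k; intros t Ht. simpl pow. rewrite Rmult_1_r. apply HD0; auto.
    rewrite !HfsS. eapply Rle_trans. apply Tcontr. intros. rewrite <- HfsS. apply IHk; auto. auto.
    simpl pow. right. ring. }
  pose (C := D0 / (1 - q)).
  assert (HCp : 0 <= C) by (unfold C; apply Rmult_le_pos; [lra| left; apply Rinv_0_lt_compat; lra]).
  assert (HCD : D0 = C * (1 - q)) by (unfold C; field; lra).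
  assert (Hgap : forall k j t, inI (x 0%nat) (x n) t -> Rabs (fs (k + j)%nat t - fs k t) <= C * q ^ k * (1 - q ^ j)).
  { intros k j t Ht. induction j.
    - rewrite Nat.add_0_r. replace (fs k t - fs k t) with 0 by ring. rewrite Rabs_R0. simpl pow. right; ring.
    - replace (k + S j)%nat with (S (k + j)) by lia.
      replace (fs (S (k+j)) t - fs k t) with ((fs (S (k+j)) t - fs (k+j)%nat t) + (fs (k+j)%nat t - fs k t)) by ring.
      eapply Rle_trans. apply Rabs_triang. pose proof (Hstep (k+j)%nat t Ht).
      rewrite pow_add, HCD in H. simpl pow. nra. }
  assert (Hgap' : forall k m t, (k <= m)%nat -> inI (x 0%nat) (x n) t -> Rabs (fs m t - fs k t) <= C * q ^ k).
  { intros k m t Hkm Ht. replace m with (k + (m - k))%nat by lia. eapply Rle_trans. apply Hgap; auto.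
    pose proof (pow_le q (m-k) (proj1 Hq01)). pose proof (pow_le q k (proj1 Hq01)).
    assert (0 <= C * q ^ k) by (apply Rmult_le_pos; auto). nra. }
  assert (Hlim : forall u, exists lv, inI (x 0%nat) (x n) u -> Un_cv (fun k => fs k u) lv).
  { intros u. destruct (classic (inI (x 0%nat) (x n) u)) as [Hu|Hu]; [|exists 0; intros; contradiction].
    assert (Hc : Cauchy_crit (fun k => fs k u)).
    { intros eps Heps. destruct (geo_small q C (eps/2) Hq01 HCp ltac:(lra)) as [N HN].
      exists N. intros p m Hp Hm. unfold R_dist.
      pose proof (Hgap' N p u Hp Hu). pose proof (Hgap' N m u Hm Hu). pose proof (HN N (le_n N)).
      replace (fs p u - fs m u) with ((fs p u - fs N u) - (fs m u - fs N u)) by ring.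
      unfold Rminus at 1. eapply Rle_lt_trans. apply Rabs_triang. rewrite Rabs_Ropp. lra. }
    destruct (R_complete _ Hc) as [lv Hlv]. exists lv. auto. }
  pose (f := fun u => proj1_sig (constructive_indefinite_description _ (Hlim u))).
  assert (Hfcv : forall u, inI (x 0%nat) (x n) u -> Un_cv (fun k => fs k u) (f u)).
  { intros u Hu. exact (proj2_sig (constructive_indefinite_description _ (Hlim u)) Hu). }
  assert (Hfk : forall k u, inI (x 0%nat) (x n) u -> Rabs (f u - fs k u) <= C * q ^ k).
  { intros k u Hu. apply (lim_bound _ _ _ _ k (Hfcv u Hu)). intros m Hm. apply Hgap'; auto. }
  assert (Hgood : good f).
  { split; [|split].
    - intros t Ht eps Heps. destruct (geo_small q C (eps/3) Hq01 HCp ltac:(lra)) as [N HN].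
      destruct (proj1 (Hfs N) t Ht (eps/3) ltac:(lra)) as [d [Hd Hd']].
      exists d. split; auto. intros t' Ht' Htt.
      pose proof (Hfk N t Ht). pose proof (Hfk N t' Ht'). pose proof (Hd' t' Ht' Htt). pose proof (HN N (le_n N)).
      replace (f t' - f t) with ((f t' - fs N t') + (fs N t' - fs N t) - (f t - fs N t)) by ring.
      unfold Rminus at 1. eapply Rle_lt_trans. apply Rabs_triang. rewrite Rabs_Ropp.
      pose proof (Rabs_triang (f t' - fs N t') (fs N t' - fs N t)). lra.
    - intros j Hj. assert (Hxj : inI (x 0%nat) (x n) (x j)) by (unfold inI; split; apply Hle; lia).
      apply Rminus_diag_uniq. apply (small_zero _ C q Hq01). intros k.
      rewrite <- (proj2 (Hfs k) j Hj). apply Hfk; auto.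
    - intros i Hi t u Hu Ht HLtu. apply Rminus_diag_uniq. apply (small_zero _ (2 * C) q Hq01). intros k.
      assert (E : fs (S k) u = Fmap sc L a b i t (fs k t)).
      { rewrite HfsS. rewrite (proj2 (TX _ (Hfs k)) i u Hi Hu). unfold phiF.
        destruct (HLinv i Hi) as [_ [HL2 _]]. rewrite <- HLtu, HL2 by auto. reflexivity. }
      assert (HuI : inI (x 0%nat) (x n) u) by (eapply HIsub; eauto).
      assert (HtI : inI (x 0%nat) (x n) t) by (eapply Hsub; eauto).
      pose proof (Hfk (S k) u HuI). pose proof (Hfk k t HtI). pose proof (Fdiff i t (fs k t) (f t) Hi Ht).
      rewrite Rabs_minus_sym in H0.
      replace (f u - Fmap sc L a b i t (f t)) with ((f u - fs (S k) u) + (Fmap sc L a b i t (fs k t) - Fmap sc L a b i t (f t))) by (rewrite E; ring).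
      eapply Rle_trans. apply Rabs_triang. simpl pow in H. pose proof (pow_le q k (proj1 Hq01)).
      assert (q * Rabs (fs k t - f t) <= q * (C * q ^ k)) by (apply Rmult_le_compat_l; lra).
      assert (C * (q * q ^ k) <= C * q ^ k) by (apply Rmult_le_compat_l; nra).
      assert (0 <= C * q ^ k) by (apply Rmult_le_pos; lra).
      assert (q * (C * q ^ k) <= C * q ^ k) by nra. lra. }
  exists f. split; [exact Hgood|]. split; [|split].
  - intros g Hg.
    destruct (cont_on_bounded _ _ _ H0n (proj1 Hg)) as [Mg HMg].
    destruct (cont_on_bounded _ _ _ H0n (proj1 Hgood)) as [Mf HMf].
    assert (Hk : forall k u, inI (x 0%nat) (x n) u -> Rabs (g u - f u) <= (Mg + Mf) * q ^ k).
    { induction k; intros u Hu.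
      - simpl pow. rewrite Rmult_1_r. unfold Rminus. eapply Rle_trans. apply Rabs_triang. rewrite Rabs_Ropp.
        pose proof (HMg u Hu). pose proof (HMf u Hu). lra.
      - destruct (Hidx u Hu) as [Hi Hin]. destruct (HLinv _ Hi) as [HL1 [_ [HL3 _]]].
        pose proof (HL1 u Hin) as Ht.
        rewrite (proj2 (proj2 Hg) _ Hi (Linv (idx u) u) u Hin Ht (HL3 u Hin)).
        rewrite (proj2 (proj2 Hgood) _ Hi (Linv (idx u) u) u Hin Ht (HL3 u Hin)).
        eapply Rle_trans. apply Fdiff; auto.
        pose proof (IHk _ (Hsub _ _ Hi Ht)). simpl pow.
        apply Rle_trans with (q * ((Mg + Mf) * q ^ k)). apply Rmult_le_compat_l; lra. right; ring. }
    intros t Ht. apply Rminus_diag_uniq. apply (small_zero _ (Mg + Mf) q Hq01). intros k. apply Hk; auto.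
  - intros i Hi [p1 p2]. simpl. destruct (HLinv _ Hi) as [HL1 [HL2 [HL3 _]]].
    destruct (Hse (gamma i) (Hgamma i Hi)) as [Hs1 [Hs2 Hs3]].
    split.
    + intros [Hp1 Hp2]. pose proof (HL1 p1 Hp1) as Ht.
      destruct (cover x n Hx (s (gamma i)) (e (gamma i)) (Linv i p1)) as [j [Hj Hjin]]; [lia| exact Ht|].
      exists j. split; [lia|]. split.
      * unfold conn. intros t' Ht'. unfold inI in *.
        pose proof (Hle (s (gamma i)) (j-1)%nat ltac:(lia)). pose proof (Hle j (e (gamma i)) ltac:(lia)). lra.
      * exists (Linv i p1). split; auto. unfold Wmap; simpl. rewrite HL3 by auto. f_equal.
        rewrite Hp2. apply (proj2 (proj2 Hgood) i Hi); auto.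
    + intros [j [Hj [Hc [t [Ht Hp]]]]]. unfold Wmap in Hp; simpl in Hp. injection Hp as E1 E2.
      pose proof (Hc t Ht) as Ht'. subst p1 p2. split. apply HLin; auto.
      symmetry. apply (proj2 (proj2 Hgood) i Hi); auto.
  - intros [p1 p2]. simpl. split.
    + intros [i [Hi [Hp1 Hp2]]]. split; auto. eapply HIsub; eauto.
    + intros [Hp1 Hp2]. destruct (cover x n Hx 0 n p1) as [j [Hj Hjin]]; [lia| exact Hp1|].
      exists j. split; [lia|]. auto.
Qed.
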